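(* Fix $i\in\{1,\dots,d\}$ and let $0\le\alpha\le 1/h_i$ and $0\le\beta\le 2/h_i-\alpha$. Then for all $n\ge1$, $$(\eta_n^i)^2\le\min\Big\{\frac{2(\eta_1^i)^2}{\alpha h_i},\ \frac{8(\eta_1^i)^2\,n}{(\alpha+\beta)h_i},\ \frac{16(\eta_1^i)^2}{(\alpha+\beta)^2h_i^2}\Big\},$$ where a term with zero denominator is interpreted as $+\infty$.
   Context: Let $H\in\mathbb{R}^{d\times d}$ be symmetric positive definite with eigenvalues $h_1\le\dots\le h_d$ (all $>0$) and orthonormal eigenvectors $p_1,\dots,p_d$. Let $q\in\mathbb{R}^d$, $\theta_*=H^{-1}q$. For parameters $\alpha,\beta$, given $\theta_0$, set $\theta_1=\theta_0$ and for $n\ge1$ $\theta_{n+1}=\frac{2n}{n+1}\theta_n-\frac{n-1}{n+1}\theta_{n-1}-\frac{1}{n+1}\big(n(\alpha+\beta)H(\theta_n-\theta_* )-(n-1)\beta H(\theta_{n-1}-\theta_* )\big)$. Let $\eta_n=n(\theta_n-\theta_* )$, so that $\eta_0=0$, $\eta_1=\theta_0-\theta_*$ and $\eta_{n+1}=(I-\alpha H)\eta_n+(I-\beta H)(\eta_n-\eta_{n-1})$; write $\eta_n^i=p_i^\top\eta_n$. *)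

(* Defs.v *)
(* the statement is purely algebraic; we state it over an
   arbitrary real field R. *)
From HB Require Import structures.
From mathcomp Require Import all_boot all_order all_algebra.
Set Implicit Arguments. Unset Strict Implicit. Unset Printing Implicit Defensive.
Import Order.TTheory GRing.Theory Num.Theory.
Local Open Scope ring_scope.

Definition theta_step (R : realFieldType) (d : nat) (H : 'M[R]_d)
    (thstar : 'cV[R]_d) (alpha beta : R) (m : nat)
    (thm thm1 : 'cV[R]_d) : 'cV[R]_d :=
  ((2 * m%:R) / (m.+1)%:R) *: thm
  - ((m.-1)%:R / (m.+1)%:R) *: thm1
  - (1 / (m.+1)%:R) *:
      ((m%:R * (alpha + beta)) *: (H *m (thm - thstar))
       - ((m.-1)%:R * beta) *: (H *m (thm1 - thstar))).

(* theta_pair n = (theta_n, theta_{n+1}), with theta_1 = theta_0. *)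
Fixpoint theta_pair (R : realFieldType) (d : nat) (H : 'M[R]_d)
    (thstar : 'cV[R]_d) (alpha beta : R) (theta0 : 'cV[R]_d) (n : nat)
    : 'cV[R]_d * 'cV[R]_d :=
  match n with
  | 0 => (theta0, theta0)
  | k.+1 => let p := theta_pair H thstar alpha beta theta0 k in
            (p.2, theta_step H thstar alpha beta k.+1 p.2 p.1)
  end.

Definition theta (R : realFieldType) (d : nat) (H : 'M[R]_d)
    (thstar : 'cV[R]_d) (alpha beta : R) (theta0 : 'cV[R]_d) (n : nat)
    : 'cV[R]_d :=
  (theta_pair H thstar alpha beta theta0 n).1.

Definition eta (R : realFieldType) (d : nat) (H : 'M[R]_d)
    (thstar : 'cV[R]_d) (alpha beta : R) (theta0 : 'cV[R]_d) (n : nat)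
    : 'cV[R]_d :=
  n%:R *: (theta H thstar alpha beta theta0 n - thstar).

Definition eta_coord (R : realFieldType) (d : nat) (H P : 'M[R]_d)
    (thstar : 'cV[R]_d) (alpha beta : R) (theta0 : 'cV[R]_d) (i : 'I_d)
    (n : nat) : R :=
  ((col i P)^T *m eta H thstar alpha beta theta0 n) 0 0.

(* Main.v *)
Require Import Defs.
From HB Require Import structures.
From mathcomp Require Import all_boot all_order all_algebra.
From mathcomp Require Import ring lra.
Import Order.TTheory GRing.Theory Num.Theory.
Local Open Scope ring_scope.

Section Scalar.
Variable R : realFieldType.

Lemma lyap (F : R -> R -> R) (c r : R) (x : nat -> R) :
  (forall n, x n.+2 = c * x n.+1 - r * x n) ->
  (forall v u, F u (c * u - r * v) <= F v u) ->
  forall n, F (x n) (x n.+1) <= F (x 0) (x 1).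
Proof.
move=> hx hF; elim=> [|n IH] //.
apply: le_trans IH; rewrite hx; exact: hF.
Qed.

Lemma psd2 (A B C v u : R) : 0 <= A -> 0 <= C -> B^+2 <= A*C ->
  0 <= A*v^+2 + 2*B*v*u + C*u^+2.
Proof.
move=> hA hC hB.
have [A0|A0] := eqVneq A 0.
  rewrite A0 mul0r in hB; rewrite A0.
  have hB0 : B^+2 = 0 by apply/le_anti; rewrite sqr_ge0 andbT.
  move/eqP: hB0; rewrite sqrf_eq0 => /eqP ->.
  have := sqr_ge0 u; nra.
have hA' : 0 < A by rewrite lt_def A0.
have E : A * (A*v^+2 + 2*B*v*u + C*u^+2) = (A*v + B*u)^+2 + (A*C - B^+2)*u^+2 by ring.
have : 0 <= A * (A*v^+2 + 2*B*v*u + C*u^+2).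
  rewrite E; apply: addr_ge0; first exact: sqr_ge0.
  apply: mulr_ge0; [lra | exact: sqr_ge0].
by rewrite pmulr_rge0.
Qed.

Lemma quad_bound (A B C v u K : R) : 0 < A ->
  A*v^+2 + 2*B*v*u + C*u^+2 <= K -> (A*C - B^+2) * u^+2 <= A*K.
Proof.
move=> hA hK.
have E : A * (A*v^+2 + 2*B*v*u + C*u^+2) = (A*v + B*u)^+2 + (A*C - B^+2)*u^+2 by ring.
have h1 : A * (A*v^+2 + 2*B*v*u + C*u^+2) <= A * K by rewrite ler_pM2l.
have h2 := sqr_ge0 (A*v + B*u).
lra.
Qed.

Variables (a b : R) (x : nat -> R).
Hypothesis x0 : x 0 = 0.
Hypothesis hx : forall n, x n.+2 = (2 - a - b) * x n.+1 - (1 - b) * x n.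
Hypothesis ha0 : 0 <= a.
Hypothesis ha1 : a <= 1.
Hypothesis hb0 : 0 <= b.
Hypothesis hb1 : b <= 2 - a.
Ltac hyps := move: (ha0) (ha1) (hb0) (hb1) => ? ? ? ?.

Lemma Qbound n :
  - x 1 ^+ 2 <= x n.+1 ^+ 2 - (2 - a - b) * x n.+1 * x n + (1 - b) * x n ^+ 2 /\
  x n.+1 ^+ 2 - (2 - a - b) * x n.+1 * x n + (1 - b) * x n ^+ 2 <= x 1 ^+ 2.
Proof.
elim: n => [|n [IH1 IH2]] /=.
  rewrite x0.
  have -> : x 1 ^+ 2 - (2 - a - b) * x 1 * 0 + (1 - b) * 0 ^+ 2 = x 1 ^+2 by ring.
  have := sqr_ge0 (x 1); split; lra.
have E : x n.+2 ^+ 2 - (2 - a - b) * x n.+2 * x n.+1 + (1 - b) * x n.+1 ^+ 2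
   = (1 - b) * (x n.+1 ^+ 2 - (2 - a - b) * x n.+1 * x n + (1 - b) * x n ^+ 2).
  rewrite hx; ring.
rewrite E; move: (x n.+1 ^+ 2 - _ * x n.+1 * x n + _ * x n ^+ 2) IH1 IH2 => Q IH1 IH2.
have hr1 : 0 <= b by [].
have hr2 : 0 <= 2 - b by hyps; lra.
have h1 : 0 <= x 1 ^+ 2 + Q by lra.
have h2 : 0 <= x 1 ^+ 2 - Q by lra.
have p1 := mulr_ge0 hr1 h1. have p2 := mulr_ge0 hr1 h2.
have p3 := mulr_ge0 hr2 h1. have p4 := mulr_ge0 hr2 h2.
split; nra.
Qed.


Lemma bound1 n : 0 < a -> a * x n ^+ 2 <= 2 * x 1 ^+ 2.
Proof.
move=> hapos.
case: n => [|n]; first by rewrite x0 expr0n /= mulr0; have := sqr_ge0 (x 1); hyps; nra.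
pose t := 2 - b.
pose A1 := t - (2-a-b)^+2 * b.
pose B1 := - ((1-b)*(2-a-b)).
pose F := fun v u => A1 * v^+2 + 2 * B1 * v * u + t * u^+2.
have dec : forall v u, F u ((2-a-b)*u - (1-b)*v) <= F v u.
  move=> v u.
  have E : F v u - F u ((2-a-b)*u - (1-b)*v) = b*((2-b)^+2 - (2-a-b)^+2)*v^+2.
    rewrite /F /A1 /B1 /t; ring.
  have : 0 <= b*((2-b)^+2 - (2-a-b)^+2)*v^+2.
    apply: mulr_ge0; last exact: sqr_ge0.
    apply: mulr_ge0 => //.
    have -> : (2-b)^+2 - (2-a-b)^+2 = a * (2 * (2 - b) - a) by ring.
    apply: mulr_ge0; hyps; lra.
  lra.
have L := @lyap F _ _ x hx dec n.
have F0 : F (x 0) (x 1) = t * x 1 ^+ 2 by rewrite /F x0; ring.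
rewrite F0 /F in L.
have hA1 : 0 < A1.
  have -> : A1 = t * (1-b)^+2 + b * a * (2 * t - a) by rewrite /A1 /t; ring.
  have [b0|b0] := eqVneq b 0.
    rewrite b0 /t; hyps. have : (1 - 0)^+2 = 1 :> R by ring. nra.
  have bpos : 0 < b by rewrite lt_def b0 hb0.
  have ht : 0 <= t * (1-b)^+2 by apply: mulr_ge0; [rewrite /t; hyps; lra | exact: sqr_ge0].
  have : 0 < b * a * (2 * t - a).
    apply: mulr_gt0; first exact: mulr_gt0.
    rewrite /t; hyps; lra.
  lra.
have Q := @quad_bound _ _ _ _ _ _ hA1 L.
pose K1 := A1 * t - B1^+2.
have P2 : a * t * A1 <= 2 * K1.
  have E : 2 * K1 - a * t * A1 =
    a * (t * (2-t) + (t-a) * ((1-t)^+2 + 1 + t^+2*(2-t) + (1-a) * t * (2-t))).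
    rewrite /K1 /A1 /B1 /t; ring.
  have ht0 : 0 <= t by rewrite /t; hyps; lra.
  have ht2 : 0 <= 2 - t by rewrite /t; hyps; lra.
  have : 0 <= a * (t * (2-t) + (t-a) * ((1-t)^+2 + 1 + t^+2*(2-t) + (1-a) * t * (2-t))).
    apply: mulr_ge0; first by hyps.
    apply: addr_ge0; first exact: mulr_ge0.
    apply: mulr_ge0; first by rewrite /t; hyps; lra.
    apply: addr_ge0; last by apply: mulr_ge0 => //; apply: mulr_ge0 => //; hyps; lra.
    apply: addr_ge0; last by apply: mulr_ge0 => //; exact: sqr_ge0.
    apply: addr_ge0 => //; exact: sqr_ge0.
  lra.
have htpos : 0 < t by rewrite /t; hyps; lra.
have hK1 : 0 < K1.
  have : 0 < a * t * A1 by apply: mulr_gt0 => //; exact: mulr_gt0.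
  lra.
rewrite -/K1 in Q.
have : K1 * (a * x n.+1 ^+ 2) <= K1 * (2 * x 1 ^+ 2).
  have h1 : K1 * (a * x n.+1 ^+ 2) = a * (K1 * x n.+1 ^+ 2) by ring.
  rewrite h1.
  have h4 : a * (K1 * x n.+1 ^+ 2) <= a * (A1 * (t * x 1 ^+ 2)) by rewrite ler_pM2l.
  apply: le_trans h4 _.
  have h2 : a * (A1 * (t * x 1 ^+ 2)) = (a * t * A1) * x 1 ^+ 2 by ring.
  have h3 : K1 * (2 * x 1 ^+ 2) = (2 * K1) * x 1 ^+ 2 by ring.
  rewrite h2 h3; apply: ler_wpM2r => //; exact: sqr_ge0.
by rewrite ler_pM2l.
Qed.


Lemma boundS n : 0 <= (2-a-b)^+2 - 4*(1-b) ->
  ((2-a-b)^+2 - 4*(1-b)) * x n ^+ 2 <= 4 * x 1 ^+ 2.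
Proof.
move=> hD.
pose c := 2 - a - b. pose r := 1 - b.
pose F := fun v u => (c^+2 - 2*r) * v^+2 + 2 * (-c) * v * u + 2 * u^+2.
have dec : forall v u, F u (c*u - r*v) <= F v u.
  move=> v u.
  have E : F v u - F u (c*u - r*v) =
    (c^+2 - 2*r - 2*r^+2) * v^+2 + 2 * (- (c * (1 - r))) * v * u + (2 + 2 * r - c^+2) * u^+2.
    rewrite /F; ring.
  have hA : 0 <= c^+2 - 2*r - 2*r^+2.
    have [b1|b1] := lerP b 1.
      have -> : c^+2 - 2*r - 2*r^+2 = ((2-a-b)^+2 - 4*(1-b)) + 2 * (b * (1 - b)).
        by rewrite /c /r; ring.
      apply: addr_ge0 => //; apply: mulr_ge0 => //; apply: mulr_ge0 => //; lra.
    have -> : c^+2 - 2*r - 2*r^+2 = c^+2 + 2 * ((b - 1) * (2 - b)) by rewrite /r; ring.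
    apply: addr_ge0; first exact: sqr_ge0.
    apply: mulr_ge0 => //; apply: mulr_ge0; hyps; lra.
  have hC : 0 <= 2 + 2 * r - c^+2.
    have -> : 2 + 2 * r - c^+2 = (2-b) * b + a * (4 - 2*b - a) by rewrite /c /r; ring.
    apply: addr_ge0; apply: mulr_ge0; hyps; lra.
  have hB : (- (c * (1 - r)))^+2 <= (c^+2 - 2*r - 2*r^+2) * (2 + 2 * r - c^+2).
    have E2 : (c^+2 - 2*r - 2*r^+2) * (2 + 2 * r - c^+2) - (- (c * (1 - r)))^+2
      = a * (4 - a - 2*b) * ((2-a-b)^+2 - 4*(1-b)) by rewrite /c /r; ring.
    have : 0 <= a * (4 - a - 2*b) * ((2-a-b)^+2 - 4*(1-b)).
      apply: mulr_ge0 => //; apply: mulr_ge0; hyps; lra.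
    lra.
  have := @psd2 _ _ _ v u hA hC hB.
  lra.
have L := @lyap F _ _ x hx dec n.
have F0 : F (x 0) (x 1) = 2 * x 1 ^+ 2 by rewrite /F x0; ring.
rewrite F0 /F in L.
have [Q1 Q2] := Qbound n.
have E : ((2-a-b)^+2 - 4*(1-b)) * x n ^+ 2 =
  ((c^+2 - 2*r) * x n^+2 + 2 * (-c) * x n * x n.+1 + 2 * x n.+1^+2)
  - 2 * (x n.+1 ^+ 2 - (2 - a - b) * x n.+1 * x n + (1 - b) * x n ^+ 2).
  rewrite /c /r; ring.
rewrite E; lra.
Qed.


Lemma boundY k : b <= 1 -> 0 < a + b -> (x k.+1 - x k)^+2 <= 2 * x 1 ^+ 2.
Proof.
move=> hb hs.
pose r := 1 - b. pose K := b + 2 * r * a.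
have hr : 0 <= r by rewrite /r; lra.
pose F := fun v u => K * (a * u^+2 + (u - v)^+2) - 2 * r * a^+2 * u * (u - v).
have dec : forall v u, F u ((2-a-b)*u - r*v) <= F v u.
  move=> v u.
  have E : F v u - F u ((2-a-b)*u - r*v) =
     a^+2 * (1 - a) * b * u^+2 + b * ((1 + r) * b + r * a * (2 + r)) * (u - v)^+2.
    rewrite /F /K /r; ring.
  have h1 : 0 <= a^+2 * (1 - a) * b * u^+2.
    apply: mulr_ge0; last exact: sqr_ge0.
    apply: mulr_ge0 => //; apply: mulr_ge0; [exact: sqr_ge0| hyps; lra].
  have h2 : 0 <= b * ((1 + r) * b + r * a * (2 + r)) * (u - v)^+2.
    apply: mulr_ge0; last exact: sqr_ge0.
    apply: mulr_ge0 => //; apply: addr_ge0; apply: mulr_ge0; hyps; try lra.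
    apply: mulr_ge0; lra.
  lra.
have L := @lyap F _ _ x hx dec k.
have F0 : F (x 0) (x 1) = (b * (1 + a) + 2 * r * a) * x 1 ^+ 2 by rewrite /F /K x0; ring.
rewrite F0 in L.
have low : (b + r * a) * (x k.+1 - x k)^+2 <= F (x k) (x k.+1).
  have E : F (x k) (x k.+1) - (b + r * a) * (x k.+1 - x k)^+2 =
    r * a^+2 * (x k.+1 - (x k.+1 - x k))^+2 + a * (b + r * a) * x k.+1 ^+2
    + r * a * (1 - a) * (x k.+1 - x k) ^+ 2.
    rewrite /F /K; ring.
  have h1 : 0 <= r * a^+2 * (x k.+1 - (x k.+1 - x k))^+2.
    apply: mulr_ge0; last exact: sqr_ge0. apply: mulr_ge0 => //; exact: sqr_ge0.
  have h2 : 0 <= a * (b + r * a) * x k.+1 ^+2.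
    apply: mulr_ge0; last exact: sqr_ge0. apply: mulr_ge0 => //.
    apply: addr_ge0 => //; exact: mulr_ge0.
  have h3 : 0 <= r * a * (1 - a) * (x k.+1 - x k) ^+ 2.
    apply: mulr_ge0; last exact: sqr_ge0. apply: mulr_ge0; [exact: mulr_ge0|hyps; lra].
  lra.
have hpos : 0 < b + r * a.
  have [b0|b0] := eqVneq b 0.
    rewrite /r b0 subr0 mul1r add0r; lra.
  have : 0 < b by rewrite lt_def b0 hb0.
  have : 0 <= r * a by exact: mulr_ge0.
  lra.
have : (b + r * a) * (x k.+1 - x k)^+2 <= (b + r * a) * (2 * x 1 ^+ 2).
  apply: le_trans low _; apply: le_trans L _.
  have E : (b + r * a) * (2 * x 1 ^+ 2) - (b * (1 + a) + 2 * r * a) * x 1 ^+ 2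
    = b * (1 - a) * x 1 ^+ 2 by ring.
  have : 0 <= b * (1 - a) * x 1 ^+ 2.
    apply: mulr_ge0; last exact: sqr_ge0. apply: mulr_ge0 => //; hyps; lra.
  lra.
by rewrite ler_pM2l.
Qed.

Lemma growth_step (X Y M N : R) : 0 <= N -> 0 <= M -> X^+2 <= N^+2 * M -> Y^+2 <= M ->
  (X + Y)^+2 <= (N + 1)^+2 * M.
Proof.
move=> hN hM hX hY.
have [N0|N0] := eqVneq N 0.
  rewrite N0 expr0n /= mul0r in hX.
  have : X^+2 = 0 by apply/le_anti; rewrite hX sqr_ge0.
  move/eqP; rewrite sqrf_eq0 => /eqP ->.
  rewrite N0 !add0r expr1n mul1r; lra.
have hNp : 0 < N by rewrite lt_def N0 hN.
have h1 : 2 * N * (X * Y) <= X^+2 + N^+2 * Y^+2.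
  have := sqr_ge0 (X - N * Y); lra.
have h2 : N^+2 * Y^+2 <= N^+2 * M by rewrite ler_wpM2l // sqr_ge0.
have h3 : N * (2 * (X * Y)) <= N * (2 * N * M) by lra.
rewrite ler_pM2l // in h3.
have E : (X + Y)^+2 = X^+2 + 2 * (X * Y) + Y^+2 by ring.
have E2 : (N + 1)^+2 * M = N^+2 * M + 2 * N * M + M by ring.
lra.
Qed.

Lemma growth n : b <= 1 -> 0 < a + b -> x n ^+ 2 <= n%:R ^+ 2 * (2 * x 1 ^+ 2).
Proof.
move=> hb hs; elim: n => [|n IH].
  by rewrite x0 expr0n /= mul0r.
have -> : x n.+1 = x n + (x n.+1 - x n) by ring.
rewrite -natr1; apply: growth_step => //.
- apply: mulr_ge0 => //; exact: sqr_ge0.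
- exact: boundY.
Qed.

Lemma bound3m n : 0 < a + b -> x n ^+ 2 * (a + b)^+2 <= 16 * x 1 ^+ 2.
Proof.
move=> hs.
have hx1 := sqr_ge0 (x 1). have hxn := sqr_ge0 (x n).
have [h8|h8] := lerP ((a+b)^+2) (8 * a).
  have hapos : 0 < a.
    have : 0 < (a+b)^+2 by rewrite exprn_gt0.
    lra.
  have B := bound1 n hapos.
  have : x n ^+ 2 * (a + b)^+2 <= x n ^+ 2 * (8 * a) by rewrite ler_wpM2l.
  lra.
have hD : 0 <= (2-a-b)^+2 - 4*(1-b).
  have -> : (2-a-b)^+2 - 4*(1-b) = (a+b)^+2 - 4 * a by ring.
  hyps; lra.
have B := boundS n hD.
have E : (2-a-b)^+2 - 4*(1-b) = (a+b)^+2 - 4 * a by ring.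
rewrite E in B.
have : x n ^+ 2 * (a + b)^+2 <= x n ^+ 2 * (2 * ((a+b)^+2 - 4 * a)).
  rewrite ler_wpM2l //; hyps; lra.
lra.
Qed.

Lemma bound2m n : (1 <= n)%N -> 0 < a + b -> x n ^+ 2 * (a + b) <= 8 * x 1 ^+ 2 * n%:R.
Proof.
move=> hn hs.
have hx1 := sqr_ge0 (x 1).
have hs2 : a + b <= 2 by hyps; lra.
case: n hn => [//|[|n]] _.
  have : x 1 ^+ 2 * (a + b) <= x 1 ^+ 2 * 2 by rewrite ler_wpM2l.
  rewrite mulr1; lra.
set N := n.+2.
have hxn := sqr_ge0 (x N).
have hN : 2 <= N%:R :> R by rewrite ler_nat.
have [big|small] := lerP 2 (N%:R * (a + b)).
  have B := bound3m N hs.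
  have : (a + b) * (x N ^+ 2 * (a + b)) <= (a + b) * (8 * x 1 ^+ 2 * N%:R).
    have E1 : (a + b) * (x N ^+ 2 * (a + b)) = x N ^+ 2 * (a + b)^+2 by ring.
    have E2 : (a + b) * (8 * x 1 ^+ 2 * N%:R) = 4 * x 1 ^+ 2 * (2 * (N%:R * (a + b))) by ring.
    rewrite E1 E2.
    have : 4 * x 1 ^+ 2 * 4 <= 4 * x 1 ^+ 2 * (2 * (N%:R * (a + b))).
      rewrite ler_wpM2l //; [lra | hyps; nra].
    lra.
  by rewrite ler_pM2l.
have hb : b <= 1.
  have : N%:R * (a + b) >= 2 * (a + b) by rewrite ler_wpM2r //; lra.
  hyps; lra.
have G := growth N hb hs.
have hNs : 0 <= N%:R :> R by lra.
have : x N ^+ 2 * (a + b) <= N%:R ^+ 2 * (2 * x 1 ^+ 2) * (a + b).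
  rewrite ler_wpM2r //; lra.
have E : N%:R ^+ 2 * (2 * x 1 ^+ 2) * (a + b) = (2 * x 1 ^+ 2 * N%:R) * (N%:R * (a + b)) by ring.
rewrite E => h.
have : (2 * x 1 ^+ 2 * N%:R) * (N%:R * (a + b)) <= (2 * x 1 ^+ 2 * N%:R) * 2.
  rewrite ler_wpM2l //; [apply: mulr_ge0 => //; lra | lra].
have : 0 <= x 1 ^+ 2 * N%:R by exact: mulr_ge0.
lra.
Qed.

End Scalar.
Lemma eta_rec (R : realFieldType) (d : nat) (H P : 'M[R]_d) (hv : 'rV[R]_d)
    (thstar theta0 : 'cV[R]_d) (alpha beta : R) (i : 'I_d) :
  H^T = H -> H *m P = P *m diag_mx hv ->
  let e := eta_coord H P thstar alpha beta theta0 i in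
  let a := alpha * hv 0 i in let b := beta * hv 0 i in
  e 0%N = 0 /\
  forall n, e n.+2 = (2 - a - b) * e n.+1 - (1 - b) * e n.
Proof.
move=> HT HP e a b.
pose p := (col i P)^T.
have Hp : p *m H = hv 0 i *: p.
  have e1 : H *m col i P = hv 0 i *: col i P.
    apply/matrixP => k l.
    have := congr1 (fun M : 'M[R]_d => M k i) HP.
    rewrite mul_mx_diag !mxE => HPk.
    rewrite mulrC -HPk; apply: eq_bigr => j _; rewrite !mxE //.
  rewrite /p -{1}HT -trmx_mul e1.
  by apply/matrixP => k l; rewrite !mxE.
pose L := fun w : 'cV[R]_d => (p *m w) 0 0.
have LD : forall u v, L (u + v) = L u + L v by move=> u v; rewrite /L mulmxDr mxE.
have LB : forall u v, L (u - v) = L u - L v by move=> u v; rewrite /L mulmxBr !mxE.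
have LZ : forall k u, L (k *: u) = k * L u by move=> k u; rewrite /L -scalemxAr mxE.
have LH : forall u, L (H *m u) = hv 0 i * L u.
  by move=> u; rewrite /L mulmxA Hp -scalemxAl mxE.
have eE : forall n, e n = n%:R * (L (theta H thstar alpha beta theta0 n) - L thstar).
  by move=> n; rewrite /e /eta_coord /eta -/p -scalemxAr mxE -LB.
split; first by rewrite eE mul0r.
move=> n.
have th2 : theta H thstar alpha beta theta0 n.+2 =
  theta_step H thstar alpha beta n.+1 (theta H thstar alpha beta theta0 n.+1)
     (theta H thstar alpha beta theta0 n) by [].
rewrite !eE th2 /theta_step /=.
rewrite !(LB, LZ, LH).
set t1 := L (theta _ _ _ _ _ n.+1).
set t0 := L (theta _ _ _ _ _ n).
set ts := L thstar.
have n1 : (n.+1)%:R = n%:R + 1 :> R by rewrite natr1.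
have n2 : (n.+2)%:R = n%:R + 2 :> R by rewrite -natr1 n1; ring.
rewrite n1 n2 /a /b.
have hn2 : n%:R + 2 != 0 :> R by rewrite -n2 pnatr_eq0.
field.
exact: hn2.
Qed.
Theorem theorem2 (R : realFieldType) (d : nat) (H P : 'M[R]_d) (hv : 'rV[R]_d)
    (q theta0 : 'cV[R]_d) (alpha beta : R) (i : 'I_d) :
  H^T = H ->
  P^T *m P = 1%:M ->
  H *m P = P *m diag_mx hv ->
  (forall j : 'I_d, 0 < hv 0 j) ->
  (forall j k : 'I_d, (j <= k)%N -> hv 0 j <= hv 0 k) ->
  0 <= alpha -> alpha <= 1 / hv 0 i ->
  0 <= beta -> beta <= 2 / hv 0 i - alpha ->
  forall n : nat, (1 <= n)%N ->
    let thstar := invmx H *m q in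
    let e := eta_coord H P thstar alpha beta theta0 i in
    (alpha * hv 0 i != 0 ->
       e n ^+ 2 <= 2 * e 1%N ^+ 2 / (alpha * hv 0 i)) /\
    ((alpha + beta) * hv 0 i != 0 ->
       e n ^+ 2 <= 8 * e 1%N ^+ 2 * n%:R / ((alpha + beta) * hv 0 i)) /\
    ((alpha + beta) ^+ 2 * hv 0 i ^+ 2 != 0 ->
       e n ^+ 2 <= 16 * e 1%N ^+ 2 / ((alpha + beta) ^+ 2 * hv 0 i ^+ 2)).
Proof.
move=> HT Porth HP hpos hord ha0 ha1 hb0 hb1 n hn thstar e.
have [e0 erec] := @eta_rec _ _ H P hv thstar theta0 alpha beta i HT HP.
have hp := hpos i.
move: ha1 hb1; set h := hv 0 i => ha1 hb1.
have hA0 : 0 <= alpha * h by apply: mulr_ge0 => //; exact: ltW.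
have hA1 : alpha * h <= 1 by rewrite -ler_pdivlMr.
have hB0 : 0 <= beta * h by apply: mulr_ge0 => //; exact: ltW.
have hB1 : beta * h <= 2 - alpha * h.
  have : beta + alpha <= 2 / h by lra.
  rewrite ler_pdivlMr // => H1.
  have E : (beta + alpha) * h = beta * h + alpha * h by ring.
  lra.
have B1 := @bound1 _ (alpha * h) (beta * h) e e0 erec hA0 hA1 hB0 hB1 n.
have B2 := @bound2m _ (alpha * h) (beta * h) e e0 erec hA0 hA1 hB0 hB1 n hn.
have B3 := @bound3m _ (alpha * h) (beta * h) e e0 erec hA0 hA1 hB0 hB1 n.
have E1 : (alpha + beta) * h = alpha * h + beta * h by ring.
have E2 : (alpha + beta) ^+ 2 * h ^+ 2 = (alpha * h + beta * h) ^+ 2 by ring.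
split; [|split].
- move=> ne.
  have apos : 0 < alpha * h by rewrite lt_def ne hA0.
  rewrite ler_pdivlMr //.
  have := B1 apos; lra.
- rewrite E1 => ne.
  have spos : 0 < alpha * h + beta * h by rewrite lt_def ne; lra.
  rewrite ler_pdivlMr //; exact: B2.
- rewrite E2 => ne.
  have spos : 0 < alpha * h + beta * h.
    rewrite lt_def; apply/andP; split; last by lra.
    by apply: contra ne => /eqP ->; rewrite expr0n.
  rewrite ler_pdivlMr ?exprn_gt0 //; exact: B3.
Qed.
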